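(* Let $\alpha,\gamma\in\mathbb{C}$ and $\Delta\in\mathbb{C}^*$. Consider extensions of conformal $\mathrm{SV}$-modules $$0\to \mathbb{C}c_\gamma\to E\to V(\alpha,\Delta)\to 0,$$ realized as $E=\mathbb{C}c_\gamma\oplus\mathbb{C}[\partial]v_\Delta$ (as $\mathbb{C}[\partial]$-modules), with $\mathbb{C}c_\gamma$ an $\mathrm{SV}$-submodule and $$L_\lambda v_\Delta=(\partial+\alpha+\Delta\lambda)v_\Delta+f(\lambda)c_\gamma,\quad M_\lambda v_\Delta=g(\lambda)c_\gamma,\quad Y_\lambda v_\Delta=h(\lambda)c_\gamma,$$ for polynomials $f,g,h\in\mathbb{C}[\lambda]$. Nontrivial extensions of this form exist if and only if $\alpha+\gamma=0$ and $\Delta\in\{1,2,-\tfrac12\}$. In these cases they are given, up to equivalence, by: (i) $\Delta=1$: $g=h=0$, $f(\lambda)=a_2\lambda^2$ with $a_2\neq0$; (ii) $\Delta=2$: $g=h=0$, $f(\lambda)=a_3\lambda^3$ with $a_3\neq0$; (iii) $\Delta=-\tfrac12$: $f=g=0$, $h(\lambda)=b_0$ with $b_0\neq0$. In particular, $\mathrm{Ext}(V(\alpha,\Delta),\mathbb{C}c_{-\alpha})$ is $1$-dimensional in each of the cases (i)–(iii).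
   Context: A Lie conformal algebra is a $\mathbb{C}[\partial]$-module $R$ with a $\mathbb{C}$-bilinear $\lambda$-bracket $R\otimes R\to\mathbb{C}[\lambda]\otimes R$, $a\otimes b\mapsto[a_\lambda b]$, satisfying $[\partial a_\lambda b]=-\lambda[a_\lambda b]$, $[a_\lambda\partial b]=(\partial+\lambda)[a_\lambda b]$, $[a_\lambda b]=-[b_{-\lambda-\partial}a]$, and $[a_\lambda[b_\mu c]]=[[a_\lambda b]_{\lambda+\mu}c]+[b_\mu[a_\lambda c]]$. A conformal module over $R$ is a $\mathbb{C}[\partial]$-module $V$ with a linear map $a\mapsto a_\lambda\in\mathrm{End}_{\mathbb{C}}(V)\otimes\mathbb{C}[\lambda]$ such that $[a_\lambda,b_\mu]=[a_\lambda b]_{\lambda+\mu}$ and $(\partial a)_\lambda=[\partial,a_\lambda]=-\lambda a_\lambda$. The Schrödinger–Virasoro conformal algebra $\mathrm{SV}$ is the free $\mathbb{C}[\partial]$-module with basis $L,M,Y$ whose nonzero $\lambda$-brackets (up to skew-symmetry) are $[L_\lambda L]=(\partial+2\lambda)L$, $[L_\lambda Y]=(\partial+\tfrac32\lambda)Y$, $[L_\lambda M]=(\partial+\lambda)M$, $[Y_\lambda Y]=(\partial+2\lambda)M$. For $\alpha,\Delta\in\mathbb{C}$, $V(\alpha,\Delta)=\mathbb{C}[\partial]v_\Delta$ is the free rank-one module with $L_\lambda v_\Delta=(\partial+\alpha+\Delta\lambda)v_\Delta$, $M_\lambda v_\Delta=Y_\lambda v_\Delta=0$. For $\gamma\in\mathbb{C}$,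 $\mathbb{C}c_\gamma$ is the one-dimensional module with $\partial c_\gamma=\gamma c_\gamma$ and all $\lambda$-actions zero. An extension of $W$ by $V$ is an exact sequence of conformal modules $0\to V\to E\to W\to0$; two extensions are equivalent if there is a module homomorphism between the middle terms commuting with the identity maps on $V$ and $W$; an extension is trivial if equivalent to $V\oplus W$. $\mathrm{Ext}(W,V)$ denotes the vector space of extension cocycles modulo coboundaries (cocycles giving trivial extensions). *)

(* Defs.v *)
(* The field of complex numbers is R[i] = complex R for an
   arbitrary model R : realType of the real numbers. *)
From HB Require Import structures.
From mathcomp Require Import all_boot all_order all_algebra.
From mathcomp Require Import reals.
From mathcomp Require Export complex.
Set Implicit Arguments. Unset Strict Implicit. Unset Printing Implicit Defensive.
Import Order.TTheory GRing.Theory Num.Theory.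
Local Open Scope ring_scope.

(* The three C[d]-basis elements L, M, Y of the Schroedinger-Virasoro
   conformal algebra SV. *)
Inductive sv_gen := svL | svM | svY.

Section SV.
Variable C : fieldType.

(* The lambda-brackets listed in the paper: [x_l y] = sum_z P(l, d) z, where
   br_given x y z l d is the value of the polynomial P at (lambda, partial)
   = (l, d).  Only the listed (nonzero) brackets. *)
Definition br_given (x y z : sv_gen) (l d : C) : C :=
  match x, y, z with
  | svL, svL, svL => d + 2 * l
  | svL, svY, svY => d + 3%:R / 2%:R * l
  | svL, svM, svM => d + l
  | svY, svY, svM => d + 2 * l
  | _, _, _ => 0
  end.

(* All brackets, the remaining ones obtained by skew-symmetry
   [b_l a] = - [a_{-l-d} b]. *)
Definition sv_br (x y z : sv_gen) (l d : C) : C :=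
  match x, y with
  | svY, svL | svM, svL => - br_given y x z (- l - d) d
  | _, _ => br_given x y z l d
  end.

(* Since SV is
   free over C[d] on L,M,Y, the action of SV is determined by the actions of
   the generators, extended by (d a)_l = -l a_l; consequently
   ([x_l y] = P(l,d) z)  gives  [x_l y]_(l+m) = P(l, -(l+m)) z_(l+m). *)
Definition is_conf_mod (V : lmodType C) (d : V -> V)
    (act : sv_gen -> C -> V -> V) : Prop :=
  [/\ (forall (k : C) (u v : V), d (k *: u + v) = k *: d u + d v),
      (forall x l (k : C) (u v : V),
          act x l (k *: u + v) = k *: act x l u + act x l v),
      (forall x l (v : V), act x l (d v) = d (act x l v) + l *: act x l v)
    & (forall x y l m (v : V),
          act x l (act y m v) - act y m (act x l v)
          = \sum_(z <- [:: svL; svM; svY])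
               sv_br x y z l (- (l + m)) *: act z (l + m) v)].

(* The C[d]-module E = C c_gamma (+) C[d] v_Delta : an element (a, p)
   stands for a c_gamma + p(d) v_Delta. *)
Local Notation extE := ((C^o) * {poly C})%type.

Definition delE (gamma : C) (e : extE) : extE := (gamma * e.1, 'X * e.2).

(* lambda-action on E given by
     L_l v = (d + alpha + Delta l) v + f(l) c,  M_l v = g(l) c,
     Y_l v = h(l) c,  x_l c = 0,
   extended to p(d) v by x_l (p(d) v) = p(d + l) (x_l v). *)
Definition actE (alpha Delta gamma : C) (f g h : {poly C})
    (x : sv_gen) (l : C) (e : extE) : extE :=
  let q := e.2 \Po ('X + l%:P) in
  let k := e.2.[gamma + l] in
  match x with
  | svL => (k * f.[l], q * ('X + (alpha + Delta * l)%:P))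
  | svM => (k * g.[l], 0)
  | svY => (k * h.[l], 0)
  end.

Definition is_ext (alpha Delta gamma : C) (f g h : {poly C}) : Prop :=
  is_conf_mod (delE gamma) (actE alpha Delta gamma f g h).

Definition ext_equiv (alpha Delta gamma : C) (f g h f' g' h' : {poly C}) : Prop :=
  exists phi : extE -> extE,
    [/\ (forall (k : C) (u v : extE), phi (k *: u + v) = k *: phi u + phi v),
        (forall e, phi (delE gamma e) = delE gamma (phi e)),
        (forall x l e, phi (actE alpha Delta gamma f g h x l e)
                       = actE alpha Delta gamma f' g' h' x l (phi e)),
        (forall a : C, phi (a, 0) = (a, 0))
      & (forall e, (phi e).2 = e.2)].

Definition ext_trivial (alpha Delta gamma : C) (f g h : {poly C}) : Prop :=
  ext_equiv alpha Delta gamma f g h 0 0 0.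

Definition nontrivial_ext (alpha Delta gamma : C) (f g h : {poly C}) : Prop :=
  is_ext alpha Delta gamma f g h /\ ~ ext_trivial alpha Delta gamma f g h.

(* Ext(V(alpha,Delta), C c_gamma) = cocycles / coboundaries, where a cocycle
   is a triple (f,g,h) giving an extension and a coboundary is a cocycle giving
   a trivial extension. *)
Definition coboundary (alpha Delta gamma : C) (f g h : {poly C}) : Prop :=
  is_ext alpha Delta gamma f g h /\ ext_trivial alpha Delta gamma f g h.

Definition Ext_dim1 (alpha Delta gamma : C) : Prop :=
  exists f0 g0 h0 : {poly C},
    [/\ is_ext alpha Delta gamma f0 g0 h0,
        ~ coboundary alpha Delta gamma f0 g0 h0
      & forall f g h, is_ext alpha Delta gamma f g h ->
          exists t : C, coboundary alpha Delta gamma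
                          (f - t *: f0) (g - t *: g0) (h - t *: h0)].

End SV.

(* Main.v *)
Require Import Defs.
From HB Require Import structures.
From mathcomp Require Import all_boot all_order all_algebra.
From mathcomp Require Import reals complex ring zify lra.
Import Order.TTheory GRing.Theory Num.Theory.
Local Open Scope ring_scope.
Section T.
Variable R : realType.
Local Notation C := (R[i]).
Local Notation extE := ((C^o) * {poly C})%type.

Lemma pairE (u v : extE) : u.1 = v.1 -> u.2 = v.2 -> u = v.
Proof. by case: u v => [? ?] [? ?] /= -> ->. Qed.

Lemma poly_ext (p q : {poly C}) : (forall x, p.[x] = q.[x]) -> p = q.
Proof.
move=> H; apply/eqP; rewrite -subr_eq0; apply/negPn/negP => nz.
set rs := [seq i%:R | i <- iota 0 (size (p - q))] : seq C.
have A : all (root (p - q)) rs.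
  by apply/allP => x _; rewrite /root !hornerE H subrr.
have U : uniq rs.
  rewrite map_inj_uniq ?iota_uniq // => m n /eqP; rewrite eqr_nat => /eqP.
  by [].
by have := max_poly_roots nz A U; rewrite size_map size_iota ltnn.
Qed.

Definition Fc (alpha Delta gamma : C) (f : {poly C}) := forall l m : C,
  (gamma + l + alpha + Delta * m) * f.[l] - (gamma + m + alpha + Delta * l) * f.[m]
  = (- (l + m) + 2 * l) * f.[l + m].
Definition Hc (alpha Delta gamma : C) (h : {poly C}) := forall l m : C,
  (gamma + l + alpha + Delta * m) * h.[l]
  = - (- (l + m) + 3%:R / 2%:R * m) * h.[l + m].

Lemma two_neq0 : (2%:R : C) != 0. Proof. by rewrite pnatr_eq0. Qed.

Ltac pring := rewrite ?comp_polyD ?comp_polyZ ?comp_polyM ?comp_polyX ?comp_polyC ?comp_polyA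
  ?polyCD ?polyCM ?polyCN ?polyCB -?mul_polyC; ring.

Lemma compXC (a b : C) : ('X + a%:P) \Po ('X + b%:P) = 'X + (a + b)%:P.
Proof. by rewrite comp_polyD comp_polyX comp_polyC polyCD addrAC addrA. Qed.

Lemma one_comp (q : {poly C}) : (1 : {poly C}) \Po q = 1.
Proof. by rewrite -polyC1 comp_polyC. Qed.

Lemma scaleO (k : C) (x : C^o) : k *: x = k * x. Proof. by []. Qed.

Lemma toC (x y : C) : x = y -> (x : C^o) = y. Proof. by []. Qed.

Lemma fstD (u v : extE) : (u + v).1 = u.1 + v.1. Proof. by []. Qed.
Lemma sndD (u v : extE) : (u + v).2 = u.2 + v.2. Proof. by []. Qed.
Lemma fstZ k (u : extE) : (k *: u).1 = k * u.1. Proof. by []. Qed.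
Lemma sndZ k (u : extE) : (k *: u).2 = k *: u.2. Proof. by []. Qed.

Lemma linE (k : C) (x1 y1 : C^o) (x2 y2 : {poly C}) :
  k *: ((x1, x2) : extE) + (y1, y2) = ((k * x1 + y1 : C), k *: x2 + y2).
Proof. by []. Qed.

Lemma conf_basic (alpha Delta gamma : C) (f g h : {poly C}) :
  [/\ (forall (k : C) (u v : extE), delE gamma (k *: u + v) = k *: delE gamma u + delE gamma v),
      (forall x l (k : C) (u v : extE),
          actE alpha Delta gamma f g h x l (k *: u + v) = k *: actE alpha Delta gamma f g h x l u + actE alpha Delta gamma f g h x l v)
    & (forall x l (v : extE), actE alpha Delta gamma f g h x l (delE gamma v) = delE gamma (actE alpha Delta gamma f g h x l v) + l *: actE alpha Delta gamma f g h x l v)].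
Proof.
split.
- move=> k [a p] [b q]; apply: pairE => /=.
    by rewrite /GRing.scale /=; ring.
  by rewrite -!mul_polyC; ring.
- move=> x l k [a p] [b q]; case: x; apply: pairE; rewrite /= ?hornerE /=.
  all: try (rewrite /GRing.scale /=; ring).
  + by pring.
  + by rewrite scaler0.
  + by rewrite scaler0.
- move=> x l [a p]; case: x; apply: pairE; rewrite /= ?hornerE /=.
  all: try (rewrite /GRing.scale /=; ring).
  all: try pring.
Qed.

Lemma cocyc_ext (alpha Delta gamma : C) (f h : {poly C}) :
  Fc alpha Delta gamma f -> Hc alpha Delta gamma h ->
  is_ext alpha Delta gamma f 0 h.
Proof.
move=> HF HH; have [B1 B2 B3] := conf_basic alpha Delta gamma f 0 h.
split => // x y l m [a p]; rewrite !big_cons big_nil addr0.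
case: x; case: y; apply: pairE; rewrite /sv_br /br_given /= ?hornerE /=.
all: rewrite ?scale0r ?scaler0 ?addr0 ?add0r ?oppr0 ?subr0 ?comp_poly0r ?comp_poly0 ?mul0r ?oppr0 //.
all: try (by pring).
all: rewrite ?horner_comp ?hornerE.
- rewrite (addrAC gamma m l) /GRing.scale /=.
  transitivity (p.[gamma + l + m] * ((gamma + l + alpha + Delta * m) * f.[l] -
    (gamma + m + alpha + Delta * l) * f.[m])); first ring.
  by rewrite HF; ring.
- rewrite !comp_polyM -!comp_polyA !compXC (addrC m l); pring.
- rewrite (addrAC gamma m l) /GRing.scale /=.
  transitivity (- (p.[gamma + l + m] * ((gamma + m + alpha + Delta * l) * h.[m]))); first ring.
  by rewrite HH (addrC m l); ring.
- rewrite /GRing.scale /=; ring.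
- rewrite /GRing.scale /=.
  transitivity (p.[gamma + l + m] * ((gamma + l + alpha + Delta * m) * h.[l])); first ring.
  by rewrite HH; ring.
Qed.


Lemma ext_cocyc (alpha Delta gamma : C) (f g h : {poly C}) :
  is_ext alpha Delta gamma f g h ->
  [/\ Fc alpha Delta gamma f, g = 0 & Hc alpha Delta gamma h].
Proof.
case=> _ _ _ H4.
have E x y l m := congr1 fst (H4 x y l m (0, 1)).
split.
- move=> l m; have := E svL svL l m.
  rewrite !big_cons big_nil addr0 /sv_br /br_given /= ?hornerE /GRing.scale /=.
  by rewrite !one_comp !hornerE => ->; ring.
- have Hg : 'X * g = 0.
    apply: poly_ext => s; have := E svY svY s 0.
    rewrite !big_cons big_nil addr0 /sv_br /br_given /= ?hornerE /GRing.scale /=.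
    rewrite !mul0r !addr0 add0r oppr0 => H.
    transitivity ((- s + 2 * s) * g.[s]); first ring.
    by rewrite -H.
  by move/eqP: Hg; rewrite mulf_eq0 polyX_eq0 => /eqP.
- move=> l m; have := E svY svL l m.
  rewrite !big_cons big_nil addr0 /sv_br /br_given /= ?hornerE /GRing.scale /=.
  rewrite !one_comp !hornerE => H.
  transitivity ((gamma + l + alpha + Delta * m) * h.[l] - 0); first ring.
  rewrite H; ring.
Qed.

Lemma triv_equiv (alpha Delta gamma : C) (f g h f' : {poly C}) (c : C) :
  (forall l, f'.[l] = f.[l] + c * (gamma + alpha + Delta * l)) ->
  ext_equiv alpha Delta gamma f g h f' g h.
Proof.
move=> Hf; exists (fun e : extE => ((e.1 + c * e.2.[gamma] : C^o), e.2)); split.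
- move=> k [a p] [b q]; cbv beta; rewrite !linE; cbn [fst snd]; congr pair.
  by rewrite hornerD hornerZ; ring.
- move=> [a p]; rewrite /delE; cbn [fst snd]; congr pair.
  by rewrite hornerM hornerX; ring.
- move=> x l [a p]; case: x; rewrite /actE; cbn [fst snd]; congr pair.
  + by rewrite Hf hornerM horner_comp hornerD hornerX hornerC !hornerD hornerX hornerC; ring.
  + by rewrite horner0 mulr0 addr0.
  + by rewrite horner0 mulr0 addr0.
- by move=> a; cbn [fst snd]; rewrite horner0 mulr0 addr0.
- by [].
Qed.

Lemma equiv_inv (alpha Delta gamma : C) (f g h f' g' h' : {poly C}) :
  ext_equiv alpha Delta gamma f g h f' g' h' ->
  [/\ exists c, forall l, f'.[l] = f.[l] + c * (gamma + alpha + Delta * l),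
      g' = g & h' = h].
Proof.
case=> phi [Hlin Hd Hact H0 H2].
set c : C := (phi (0, 1)).1.
have P01 : phi (0, 1) = (c, 1) by apply: pairE => //; rewrite H2.
have Hadd u v : phi (u + v) = phi u + phi v.
  by have := Hlin 1 u v; rewrite !scale1r.
have P0 : phi 0 = 0 := H0 0.
have Hsc k u : phi (k *: u) = k *: phi u.
  by have := Hlin k u 0; rewrite !addr0 P0 addr0.
split.
- exists c => l.
  have E1 : actE alpha Delta gamma f g h svL l (0, 1) =
      ((f.[l] : C^o), 'X + (alpha + Delta * l)%:P).
    rewrite /actE; cbn [fst snd]; congr pair.
      by rewrite hornerC mul1r.
    by rewrite one_comp mul1r.
  have E2 : ((f.[l] : C^o), 'X + (alpha + Delta * l)%:P) =
      (f.[l], 0) + delE gamma (0, 1) + (alpha + Delta * l) *: (0, 1).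
    rewrite /delE; apply: pairE; rewrite ?fstD ?sndD ?fstZ ?sndZ; cbn [fst snd].
      by apply: toC; ring.
    by pring.
  have := congr1 fst (Hact svL l (0, 1)).
  rewrite E1 E2 !Hadd Hsc Hd H0 P01 /actE /delE !fstD fstZ; cbn [fst snd].
  by rewrite hornerC mul1r => <-; ring.
- apply: poly_ext => l.
  have := congr1 fst (Hact svM l (0, 1)).
  have -> : actE alpha Delta gamma f g h svM l (0, 1) = ((g.[l] : C^o), 0).
    by rewrite /actE; cbn [fst snd]; congr pair; rewrite hornerC mul1r.
  by rewrite H0 P01 /actE; cbn [fst snd]; rewrite hornerC mul1r.
- apply: poly_ext => l.
  have := congr1 fst (Hact svY l (0, 1)).
  have -> : actE alpha Delta gamma f g h svY l (0, 1) = ((h.[l] : C^o), 0).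
    by rewrite /actE; cbn [fst snd]; congr pair; rewrite hornerC mul1r.
  by rewrite H0 P01 /actE; cbn [fst snd]; rewrite hornerC mul1r.
Qed.

Lemma eq_lin2 (k1 k2 : C) {x y u1 v1 u2 v2 : C} : u1 = v1 -> u2 = v2 ->
  x - y = k1 * (u1 - v1) + k2 * (u2 - v2) -> x = y.
Proof. by move=> -> -> /eqP; rewrite !subrr !mulr0 addr0 subr_eq0 => /eqP. Qed.

Ltac hsimp := rewrite ?(hornerD, hornerN, hornerM, hornerC, hornerX, hornerZ, horner_comp, hornerXn, horner0, horner_exp).

Lemma eq_lin (k : C) {x y u v : C} : u = v -> x - y = k * (u - v) -> x = y.
Proof. by move=> -> /eqP; rewrite subrr mulr0 subr_eq0 => /eqP. Qed.

Lemma F_at0 (alpha Delta gamma : C) (f : {poly C}) : Fc alpha Delta gamma f ->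
  forall l, (gamma + alpha) * f.[l] = (gamma + alpha + Delta * l) * f.[0].
Proof.
move=> HF l; have H := HF l 0; rewrite !addr0 in H.
by apply: (eq_lin 1 H); rewrite !mulr0 !addr0; ring.
Qed.

Lemma euler_poly (alpha Delta gamma : C) (f : {poly C}) :
  alpha + gamma = 0 -> Fc alpha Delta gamma f -> f.[0] = 0 ->
  'X * f^`() = (Delta + 1) *: f - (Delta * f^`().[0]) *: 'X.
Proof.
move=> Hb HF H0; apply: poly_ext => l.
pose Q := ((gamma + l + alpha)%:P + Delta *: 'X) * (f.[l])%:P
   - ('X + (gamma + alpha + Delta * l)%:P) * f - (l%:P - 'X) * (f \Po ('X + l%:P)).
have HQ : Q = 0.
  apply: poly_ext => m; rewrite /Q; hsimp; rewrite (addrC m l).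
  apply: (eq_lin 1 (HF l m)); ring.
have := congr1 (fun p => p^`().[0]) HQ; cbv beta.
rewrite /Q !derivE deriv_comp !derivE; hsimp; rewrite H0.
have Hg : gamma = - alpha by apply/eqP; rewrite -(subr0 gamma) -Hb; apply/eqP; ring.
rewrite Hg => H.
rewrite !add0r in H; apply: (eq_lin (-1) H); ring.
Qed.

Lemma euler_coef (alpha Delta gamma : C) (f : {poly C}) :
  alpha + gamma = 0 -> Fc alpha Delta gamma f -> f.[0] = 0 ->
  forall n, (1 < n)%N -> f`_n * (n%:R - (Delta + 1)) = 0.
Proof.
move=> Hb HF H0 [|[|k]] // _.
have := congr1 (fun p : {poly C} => p`_k.+2) (euler_poly _ _ _ _ Hb HF H0); cbv beta.
rewrite coefXM coefB !coefZ coefX coef_deriv /= mulr0 subr0 => E; rewrite -mulr_natr in E.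
by apply/eqP; rewrite mulrBr E mulrC subrr.
Qed.

Lemma bracket_neq0 (n : nat) : (3 < n)%N ->
  (3%:R - n%:R) * 2%:R ^+ n - (2%:R * n%:R - 3%:R) * (-1) ^+ n - 3%:R != 0 :> C.
Proof.
move=> Hn; have Hx : (3 <= 2 ^ n)%N.
  by apply: (leq_trans _ (leq_pexp2l (isT : (0 < 2)%N) (ltnW Hn))).
rewrite -signr_odd; case: (odd n).
- have -> : (3%:R - n%:R) * 2%:R ^+ n - (2%:R * n%:R - 3%:R) * (-1) ^+ true - 3%:R
      = (3 * 2 ^ n + 2 * n)%:R - (n * 2 ^ n + 6)%:R :> C.
    by rewrite !natrD !natrM natrX; ring.
  rewrite subr_eq0 eqr_nat; apply/eqP; move: Hx Hn; set x := (2 ^ n)%N => Hx Hn; nia.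
- have -> : (3%:R - n%:R) * 2%:R ^+ n - (2%:R * n%:R - 3%:R) * (-1) ^+ false - 3%:R
      = (3 * 2 ^ n)%:R - (n * 2 ^ n + 2 * n)%:R :> C.
    by rewrite !natrD !natrM natrX; ring.
  rewrite subr_eq0 eqr_nat; apply/eqP; move: Hx Hn; set x := (2 ^ n)%N => Hx Hn; nia.
Qed.

Lemma f_class (alpha Delta gamma : C) (f : {poly C}) :
  Delta != 0 -> alpha + gamma = 0 -> Fc alpha Delta gamma f ->
  [/\ f = f`_1 *: 'X + f`_2 *: 'X^2 + f`_3 *: 'X^3,
      (Delta != 1 -> f`_2 = 0) & (Delta != 2 -> f`_3 = 0)].
Proof.
move=> HD Hb HF.
have Hg : gamma = - alpha by apply: (eq_lin 1 Hb); ring.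
have H0 : f.[0] = 0.
  have := F_at0 _ _ _ _ HF 1; rewrite Hg addNr mul0r add0r mulr1 => /esym/eqP.
  by rewrite mulf_eq0 (negbTE HD) /= => /eqP.
have EC := euler_coef _ _ _ _ Hb HF H0.
have key : forall n, (1 < n)%N -> f`_n != 0 ->
    ((n == 2)%N && (Delta == 1)) || ((n == 3)%N && (Delta == 2)).
  move=> n Hn Hfn.
  have DE : Delta = n%:R - 1.
    move/eqP: (EC n Hn); rewrite mulf_eq0 (negbTE Hfn) /= subr_eq0 => /eqP ->; ring.
  have Hoth m : (1 < m)%N -> m != n -> f`_m = 0.
    move=> Hm Hmn; move/eqP: (EC m Hm); rewrite DE subrK mulf_eq0 subr_eq0 eqr_nat.
    by rewrite (negbTE Hmn) orbF => /eqP.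
  have Ef : f = f`_1 *: 'X + f`_n *: 'X^n.
    apply/polyP => i; rewrite coefD !coefZ coefX coefXn.
    case: i => [|[|i]].
    - have n0 : (0 == n)%N = false by apply/eqP => E; move: Hn; rewrite -E.
      by rewrite n0 -horner_coef0 H0 /= !mulr0 addr0.
    - have n1 : (1 == n)%N = false by apply/eqP => E; move: Hn; rewrite -E.
      by rewrite n1 /= mulr1 mulr0 addr0.
    - case: (eqVneq i.+2 n) => [<-|ne]; first by rewrite /= mulr0 mulr1 add0r.
      by rewrite /= !mulr0 addr0 Hoth.
  case: (ltngtP n 3) => [lt|gt|eq].
  - have n2 : n = 2%N by apply/eqP; rewrite eqn_leq -ltnS lt Hn.
    by rewrite DE n2 /=; apply/orP; left; apply/eqP; ring.
  - exfalso; move: (HF 2 (-1)).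
    have -> : (2 : C) + -1 = 1 by ring.
    rewrite Ef; hsimp; rewrite expr1n Hg DE => H.
    have : f`_n * ((3%:R - n%:R) * 2%:R ^+ n - (2%:R * n%:R - 3%:R) * (-1) ^+ n - 3%:R) = 0.
      by apply: (eq_lin 1 H); ring.
    by move/eqP; rewrite mulf_eq0 (negbTE Hfn) (negbTE (bracket_neq0 _ gt)).
  - by rewrite DE eq /=; apply/eqP; ring.
split.
- apply/polyP => i; rewrite !coefD !coefZ coefX !coefXn.
  case: i => [|[|[|[|i]]]] /=.
  + by rewrite -horner_coef0 H0 !mulr0 !addr0.
  + by rewrite mulr1 !mulr0 !addr0.
  + by rewrite mulr1 !mulr0 add0r addr0.
  + by rewrite mulr1 !mulr0 !add0r.
  + rewrite !mulr0 !addr0; apply/eqP; apply/negPn/negP => nz.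
    by move: (key i.+4 isT nz).
- move=> HD1; apply/eqP; apply/negPn/negP => nz.
  by move: (key 2 isT nz); rewrite /= (negbTE HD1).
- move=> HD2; apply/eqP; apply/negPn/negP => nz.
  by move: (key 3 isT nz); rewrite /= (negbTE HD2).
Qed.

Lemma h_poly (alpha Delta gamma : C) (h : {poly C}) : Hc alpha Delta gamma h ->
  'X * h = (-2 * h.[0]) *: ((gamma + alpha)%:P + Delta *: 'X).
Proof.
move=> HH; apply: poly_ext => m; have H := HH 0 m; rewrite !addr0 !add0r in H.
hsimp; apply: (eq_lin 2 H); by field.
Qed.

Lemma h_class (alpha Delta gamma : C) (h : {poly C}) : Hc alpha Delta gamma h ->
  (alpha + gamma != 0 -> h = 0) /\ (alpha + gamma = 0 -> h = 0 \/ (Delta = - (1 / 2%:R) /\ h = (h.[0])%:P)).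
Proof.
move=> HH; have E := h_poly _ _ _ _ HH; split.
- move=> Hb.
  have h0 : h.[0] = 0.
    have := congr1 (fun p => p.[0]) E; cbv beta; hsimp; rewrite mul0r mulr0 addr0.
    move/esym/eqP; rewrite !mulf_eq0 oppr_eq0 (negbTE two_neq0) /= (addrC gamma) (negbTE Hb) orbF.
    by move/eqP.
  by move/eqP: E; rewrite h0 mulr0 scale0r mulf_eq0 polyX_eq0 /= => /eqP.
- move=> Hb.
  have E' : 'X * h = 'X * (-2 * h.[0] * Delta)%:P.
    rewrite E (addrC gamma) Hb polyC0 add0r scalerA -mul_polyC; ring.
  have Eh := mulfI (negbT (@polyX_eq0 C)) E'.
  have h0 : h.[0] * (1 + 2 * Delta) = 0.
    have := congr1 (fun p => p.[0]) Eh; cbv beta; hsimp => H.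
    by apply: (eq_lin 1 H); ring.
  move/eqP: h0; rewrite mulf_eq0 => /orP [/eqP z|/eqP d].
    by left; rewrite Eh z mulr0 mul0r polyC0.
  right; split.
    by apply: (eq_lin (1/2%:R) d); field.
  rewrite {1}Eh; congr polyC.
  have -> : Delta = - (1 / 2%:R) by apply: (eq_lin (1/2%:R) d); field.
  by field.
Qed.

Lemma Fc_lin (alpha Delta gamma a : C) : alpha + gamma = 0 ->
  Fc alpha Delta gamma (a *: 'X).
Proof.
move=> Hb; have Hg : gamma = - alpha by apply: (eq_lin 1 Hb); ring.
by move=> l m; hsimp; rewrite Hg; ring.
Qed.

Lemma Hc0 (alpha Delta gamma : C) : Hc alpha Delta gamma 0.
Proof. by move=> l m; rewrite !horner0 !mulr0. Qed.

Lemma lin_triv (alpha Delta gamma a : C) : alpha + gamma = 0 -> Delta != 0 ->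
  ext_trivial alpha Delta gamma (a *: 'X) 0 0.
Proof.
move=> Hb HD; have Hg : gamma = - alpha by apply: (eq_lin 1 Hb); ring.
apply: (triv_equiv _ _ _ _ _ _ _ (- a / Delta)) => l.
by hsimp; rewrite Hg; field.
Qed.

Lemma lin_cob (alpha Delta gamma a : C) : alpha + gamma = 0 -> Delta != 0 ->
  coboundary alpha Delta gamma (a *: 'X) 0 0.
Proof.
move=> Hb HD; split; last exact: (lin_triv _ _ _ _ Hb HD).
exact: cocyc_ext (Fc_lin _ _ _ _ Hb) (Hc0 _ _ _).
Qed.

Lemma not_triv_Xk (alpha Delta gamma a : C) (k : nat) :
  alpha + gamma = 0 -> a != 0 -> (k = 2 \/ k = 3)%N ->
  ~ ext_trivial alpha Delta gamma (a *: 'X^k) 0 0.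
Proof.
move=> Hb Ha Hk /equiv_inv [[c Hc] _ _].
have Hg : gamma = - alpha by apply: (eq_lin 1 Hb); ring.
have H1 := Hc 1; have H2 := Hc 2; move: H1 H2; hsimp; rewrite Hg => H1 H2.
have : a * (2%:R ^+ k - 2%:R) = 0.
  by rewrite expr1n in H1; apply: (eq_lin2 (-1) 2 H2 H1); ring.
move/eqP; rewrite mulf_eq0 (negbTE Ha) /=.
by case: Hk => ->; rewrite -natrX -natrB // pnatr_eq0.
Qed.

Lemma trivial_unless (alpha Delta gamma : C) (f g h : {poly C}) :
  Delta != 0 -> is_ext alpha Delta gamma f g h ->
  ~~ [&& alpha + gamma == 0 & [|| Delta == 1, Delta == 2 | Delta == - (1 / 2%:R)]] ->
  ext_trivial alpha Delta gamma f g h.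
Proof.
move=> HD He nb; have [HF -> HH] := ext_cocyc _ _ _ _ _ _ He.
have [hnz hz] := h_class _ _ _ _ HH.
case: (eqVneq (alpha + gamma) 0) => Hb.
- move: nb; rewrite Hb eqxx /= => /norP [D1 /norP [D2 D3]].
  have -> : h = 0.
    case: (hz Hb) => // [[D _]]; by rewrite D eqxx in D3.
  have [Ef f2 f3] := f_class _ _ _ _ HD Hb HF.
  by rewrite Ef f2 // f3 // !scale0r !addr0; exact: (lin_triv _ _ _ _ Hb HD).
- rewrite (hnz Hb).
  have Hb' : gamma + alpha != 0 by rewrite addrC.
  apply: (triv_equiv _ _ _ _ _ _ _ (- f.[0] / (gamma + alpha))) => l.
  have := F_at0 _ _ _ _ HF l => E.
  rewrite horner0; apply: (eq_lin (- (gamma + alpha)^-1) E); field.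
  by rewrite Hb'.
Qed.

Lemma one_neq_two : (1 : C) != 2%:R.
Proof. by rewrite -[1]/(1%:R) eqr_nat. Qed.

Lemma one_neq_mhalf : (1 : C) != - (1 / 2%:R).
Proof.
apply/eqP => E; have H3 : (3%:R : C) = 2%:R * (1 - (- (1 / 2%:R))) by field; rewrite ?two_neq0.
by move: H3; rewrite -E subrr mulr0 => /eqP; rewrite pnatr_eq0.
Qed.

Lemma two_neq_mhalf : (2%:R : C) != - (1 / 2%:R).
Proof.
apply/eqP => E; have H3 : (5%:R : C) = 2%:R * (2%:R - (- (1 / 2%:R))) by field; rewrite ?two_neq0.
by move: H3; rewrite -E subrr mulr0 => /eqP; rewrite pnatr_eq0.
Qed.

Lemma cls_k (alpha Delta gamma : C) (k : nat) (f g h : {poly C}) :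
  Delta != 0 -> alpha + gamma = 0 ->
  (k = 2%N /\ Delta = 1 \/ k = 3%N /\ Delta = 2%:R) ->
  is_ext alpha Delta gamma f g h ->
  exists f1 a, [/\ f = f1 *: 'X + a *: 'X^k, g = 0 & h = 0].
Proof.
move=> HD Hb Hk He; have [HF -> HH] := ext_cocyc _ _ _ _ _ _ He.
have [_ hz] := h_class _ _ _ _ HH.
have [Ef f2 f3] := f_class _ _ _ _ HD Hb HF.
have h0 : h = 0.
  case: (hz Hb) => // [[D _]]; move: D.
  by case: Hk => [[_ ->]|[_ ->]] => /eqP; rewrite ?(negbTE one_neq_mhalf) ?(negbTE two_neq_mhalf).
case: Hk => [[-> D]|[-> D]].
- exists f`_1, f`_2; split => //.
  have f3' : f`_3 = 0 by apply: f3; rewrite D one_neq_two.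
  by rewrite {1}Ef f3' scale0r addr0.
- exists f`_1, f`_3; split => //.
  have f2' : f`_2 = 0 by apply: f2; rewrite D eq_sym one_neq_two.
  by rewrite {1}Ef f2' scale0r addr0.
Qed.

Lemma Fc_Xk (alpha Delta gamma a : C) (k : nat) : alpha + gamma = 0 ->
  (k = 2%N /\ Delta = 1 \/ k = 3%N /\ Delta = 2%:R) ->
  Fc alpha Delta gamma (a *: 'X^k).
Proof.
move=> Hb Hk; have Hg : gamma = - alpha by apply: (eq_lin 1 Hb); ring.
by move=> l m; case: Hk => [[-> ->]|[-> ->]]; hsimp; rewrite Hg; ring.
Qed.

Lemma part_f (alpha Delta gamma : C) (k : nat) :
  Delta != 0 -> alpha + gamma = 0 ->
  (k = 2%N /\ Delta = 1 \/ k = 3%N /\ Delta = 2%:R) ->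
  [/\ (forall a : C, a != 0 ->
               nontrivial_ext alpha Delta gamma (a *: 'X^k) 0 0),
      (forall f g h, nontrivial_ext alpha Delta gamma f g h ->
               exists a : C, a != 0 /\
                 ext_equiv alpha Delta gamma f g h (a *: 'X^k) 0 0)
    & Ext_dim1 alpha Delta gamma].
Proof.
move=> HD Hb Hk.
have Hg : gamma = - alpha by apply: (eq_lin 1 Hb); ring.
have Hk' : (k = 2 \/ k = 3)%N by case: Hk => [[->]|[->]]; [left|right].
have A : forall a : C, a != 0 -> nontrivial_ext alpha Delta gamma (a *: 'X^k) 0 0.
  move=> a Ha; split; last exact: not_triv_Xk.
  exact: cocyc_ext (Fc_Xk _ _ _ _ _ Hb Hk) (Hc0 _ _ _).
split => //.
- move=> f g h [He Hnt].
  have [f1 [a [Ef Eg Eh]]] := cls_k _ _ _ _ _ _ _ HD Hb Hk He; subst g h.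
  have Ha : a != 0.
    apply/eqP => a0; apply: Hnt; rewrite Ef a0 scale0r addr0; exact: (lin_triv _ _ _ _ Hb HD).
  exists a; split => //.
  apply: (triv_equiv _ _ _ _ _ _ _ (- f1 / Delta)) => l.
  by rewrite Ef; hsimp; rewrite Hg; field.
- exists ('X^k), 0, 0; split.
  + by have [] := A 1 (oner_neq0 _); rewrite scale1r.
  + move=> [_ T]; apply: (not_triv_Xk alpha Delta gamma 1 k Hb (oner_neq0 _) Hk').
    by rewrite scale1r.
  + move=> f g h He.
    have [f1 [a [Ef -> ->]]] := cls_k _ _ _ _ _ _ _ HD Hb Hk He.
    exists a; rewrite Ef addrK scaler0 subr0; exact: (lin_cob _ _ _ _ Hb HD).
Qed.

Lemma cls_h (alpha Delta gamma : C) (f g h : {poly C}) :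
  alpha + gamma = 0 -> Delta = - (1 / 2%:R) ->
  is_ext alpha Delta gamma f g h ->
  exists f1, [/\ f = f1 *: 'X, g = 0 & h = (h.[0])%:P].
Proof.
move=> Hb D He.
have HD : Delta != 0 by rewrite D oppr_eq0 mul1r invr_eq0 two_neq0.
have [HF -> HH] := ext_cocyc _ _ _ _ _ _ He.
have [_ hz] := h_class _ _ _ _ HH.
have [Ef f2 f3] := f_class _ _ _ _ HD Hb HF.
have f2' : f`_2 = 0 by apply: f2; rewrite D eq_sym one_neq_mhalf.
have f3' : f`_3 = 0 by apply: f3; rewrite D eq_sym two_neq_mhalf.
exists f`_1; split => //.
  by rewrite {1}Ef f2' f3' !scale0r !addr0.
by case: (hz Hb) => [->|[_ //]]; rewrite horner0.
Qed.

Lemma part_h (alpha Delta gamma : C) :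
  alpha + gamma = 0 -> Delta = - (1 / 2%:R) ->
  [/\ (forall b0 : C, b0 != 0 ->
               nontrivial_ext alpha Delta gamma 0 0 b0%:P),
      (forall f g h, nontrivial_ext alpha Delta gamma f g h ->
               exists b0 : C, b0 != 0 /\
                 ext_equiv alpha Delta gamma f g h 0 0 b0%:P)
    & Ext_dim1 alpha Delta gamma].
Proof.
move=> Hb D.
have HD : Delta != 0 by rewrite D oppr_eq0 mul1r invr_eq0 two_neq0.
have Hg : gamma = - alpha by apply: (eq_lin 1 Hb); ring.
have A : forall b0 : C, is_ext alpha Delta gamma 0 0 b0%:P.
  move=> b0; apply: cocyc_ext.
    by have := Fc_lin alpha Delta gamma 0 Hb; rewrite scale0r.
  by move=> l m; hsimp; rewrite Hg D; field; rewrite ?two_neq0.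
have NT : forall b0 : C, b0 != 0 -> ~ ext_trivial alpha Delta gamma 0 0 b0%:P.
  move=> b0 Hb0 /equiv_inv [_ _ E].
  by move: Hb0; rewrite -polyC_eq0 -E eqxx.
split.
- by move=> b0 Hb0; split; [exact: A | exact: NT].
- move=> f g h [He Hnt].
  have [f1 [Ef Eg Eh]] := cls_h _ _ _ _ _ _ Hb D He; subst g.
  have Hh0 : h.[0] != 0.
    apply/eqP => h0; apply: Hnt; rewrite Ef Eh h0 polyC0; exact: (lin_triv _ _ _ _ Hb HD).
  exists h.[0]; split => //; rewrite -Eh.
  apply: (triv_equiv _ _ _ _ _ _ _ (- f1 / Delta)) => l.
  by rewrite Ef; hsimp; rewrite Hg; field.
- exists 0, 0, 1; split.
  + by rewrite -polyC1; exact: A.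
  + by move=> [_ /equiv_inv [_ _ E]]; move/eqP: E; rewrite eq_sym oner_eq0.
  + move=> f g h He.
    have [f1 [Ef Eg Eh]] := cls_h _ _ _ _ _ _ Hb D He; subst g.
    exists h.[0]; rewrite scaler0 !subr0 {1}Eh -alg_polyC subrr Ef.
    exact: (lin_cob _ _ _ _ Hb HD).
Qed.
End T.

Theorem theorem3p2 (R : realType) (alpha gamma Delta : R[i]) (hD : Delta != 0) :
  ((exists f g h : {poly R[i]}, nontrivial_ext alpha Delta gamma f g h) <->
     (alpha + gamma = 0 /\ (Delta = 1 \/ Delta = 2 \/ Delta = - (1 / 2%:R))))
  /\ (alpha + gamma = 0 -> Delta = 1 ->
        [/\ (forall a2 : R[i], a2 != 0 ->
               nontrivial_ext alpha Delta gamma (a2 *: 'X^2) 0 0),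
            (forall f g h, nontrivial_ext alpha Delta gamma f g h ->
               exists a2 : R[i], a2 != 0 /\
                 ext_equiv alpha Delta gamma f g h (a2 *: 'X^2) 0 0)
          & Ext_dim1 alpha Delta gamma])
  /\ (alpha + gamma = 0 -> Delta = 2 ->
        [/\ (forall a3 : R[i], a3 != 0 ->
               nontrivial_ext alpha Delta gamma (a3 *: 'X^3) 0 0),
            (forall f g h, nontrivial_ext alpha Delta gamma f g h ->
               exists a3 : R[i], a3 != 0 /\
                 ext_equiv alpha Delta gamma f g h (a3 *: 'X^3) 0 0)
          & Ext_dim1 alpha Delta gamma])
  /\ (alpha + gamma = 0 -> Delta = - (1 / 2%:R) ->
        [/\ (forall b0 : R[i], b0 != 0 ->
               nontrivial_ext alpha Delta gamma 0 0 b0%:P),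
            (forall f g h, nontrivial_ext alpha Delta gamma f g h ->
               exists b0 : R[i], b0 != 0 /\
                 ext_equiv alpha Delta gamma f g h 0 0 b0%:P)
          & Ext_dim1 alpha Delta gamma]).
Proof.
split; [|split; [|split]].
- split.
  + move=> [f [g [h [He Hnt]]]].
    have : [&& alpha + gamma == 0 & [|| Delta == 1, Delta == 2 | Delta == - (1 / 2%:R)]].
      by apply/negPn/negP => nb; apply: Hnt; exact: trivial_unless.
    case/andP => /eqP Hb /or3P [] /eqP D; split => //.
    * by left.
    * by right; left.
    * by right; right.
  + move=> [Hb [D|[D|D]]].
    * have [A _ _] := part_f R alpha Delta gamma 2 hD Hb (or_introl (conj erefl D)).
      by exists (1 *: 'X^2), 0, 0; exact: A (oner_neq0 _).
    * have [A _ _] := part_f R alpha Delta gamma 3 hD Hb (or_intror (conj erefl D)).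
      by exists (1 *: 'X^3), 0, 0; exact: A (oner_neq0 _).
    * have [A _ _] := part_h R alpha Delta gamma Hb D.
      by exists 0, 0, 1%:P; exact: A (oner_neq0 _).
- by move=> Hb D; exact: part_f R alpha Delta gamma 2 hD Hb (or_introl (conj erefl D)).
- by move=> Hb D; exact: part_f R alpha Delta gamma 3 hD Hb (or_intror (conj erefl D)).
- by move=> Hb D; exact: part_h R alpha Delta gamma Hb D.
Qed.
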